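(* Assume the different $\mathfrak{d}=(\delta)$ of $F$ is principal. Let $p\in\mathcal{O}$ be a prime element, $\varepsilon_1,\varepsilon_2\in\mathcal{O}^\times$, and $e\ge1$ an integer. Then for every $r\in\mathcal{O}$ with $p\mid r$, $$S(\delta^{-1}\varepsilon_1,\delta^{-1}r;\varepsilon_2p^e)=\begin{cases}-1,& e=1,\\ 0,& e>1.\end{cases}$$
   Context: $F$ is a totally real number field with ring of integers $\mathcal{O}$ and different $\mathfrak{d}$. A prime element is a generator of a nonzero prime ideal of $\mathcal{O}$. $e(\nu)=\exp(2\pi i\,\mathrm{Tr}_{F/\mathbb{Q}}(\nu))$. For $\nu,\mu\in\mathfrak{d}^{-1}$ and nonzero $q\in\mathcal{O}$, $S(\nu,\mu;q)=\sum_{x\in(\mathcal{O}/q\mathcal{O})^\times}e\left(\frac{\nu x+\mu x^{-1}}{q}\right)$, where $xx^{-1}\equiv1\bmod q$. *)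

(* Defs.v *)
From HB Require Import structures.
From mathcomp Require Import all_boot all_order all_algebra all_field.
From mathcomp Require Import complex.
From mathcomp Require Import reals trigo.
Set Implicit Arguments.
Unset Strict Implicit.
Unset Printing Implicit Defensive.
Import GRing.Theory Num.Theory.
Local Open Scope ring_scope.

Section NumberField.
Variable L : fieldExtType rat.

Definition trace (x : L) : rat :=
  \sum_(i < \dim {:L}) coord (vbasis {:L}) i (x * (vbasis {:L})`_i).

Definition inO (x : L) : Prop :=
  exists P : {poly int}, P \is monic /\ root (map_poly (fun z : int => z%:~R) P) x.

Definition dvdO (a b : L) : Prop := exists c, inO c /\ b = a * c.

Definition unitO (x : L) : Prop := inO x /\ exists y, inO y /\ x * y = 1.

Definition congO (q a b : L) : Prop := dvdO q (a - b).

Definition unit_modO (q x : L) : Prop := exists y, inO y /\ congO q (x * y) 1.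

Definition prime_elt (p : L) : Prop :=
  [/\ inO p, p != 0, ~ unitO p &
      forall a b, inO a -> inO b -> dvdO p (a * b) -> dvdO p a \/ dvdO p b].

Definition totally_real : Prop :=
  forall f : {rmorphism L -> algC}, forall x : L, f x \is Num.real.

Definition in_inv_diff (x : L) : Prop :=
  forall y, inO y -> exists z : int, trace (x * y) = z%:~R.

(* the different d is principal, generated by delta: d = delta O,
   equivalently d^{-1} = delta^{-1} O *)
Definition different_gen (delta : L) : Prop :=
  delta != 0 /\ forall x, in_inv_diff x <-> exists y, inO y /\ x = y / delta.

Definition reduced_residue_system (q : L) (s : seq L) : Prop :=
  [/\ forall x, x \in s -> inO x /\ unit_modO q x,
      forall i j, (i < size s)%N -> (j < size s)%N -> i != j ->
        ~ congO q (nth 0 s i) (nth 0 s j) &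
      forall x, inO x -> unit_modO q x -> exists2 y, y \in s & congO q x y].

Definition inverse_mod_on (q : L) (s : seq L) (inv : L -> L) : Prop :=
  forall x, x \in s -> inO (inv x) /\ congO q (x * inv x) 1.

End NumberField.

Definition expi2pi (R : realType) (t : rat) : R[i] :=
  Complex (cos (2 * pi * ratr t)) (sin (2 * pi * ratr t)).

Definition kloosterman (R : realType) (L : fieldExtType rat)
  (s : seq L) (inv : L -> L) (nu mu q : L) : R[i] :=
  \sum_(x <- s) expi2pi R (trace ((nu * x + mu * inv x) / q)).

(* Main.v *)
Require Import Defs.
From HB Require Import structures.
From mathcomp Require Import all_boot all_order all_algebra all_field.
From mathcomp Require Import complex.
From mathcomp Require Import reals trigo boolp.
From mathcomp Require Import ring lra.
Import Order.TTheory GRing.Theory Num.Theory.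
Local Open Scope ring_scope.
Lemma inO_integral {L : fieldExtType rat} (x : L) :
  inO x <-> integralOver (fun z : int => z%:~R) x.
Proof. by split=> [[P [m r]]|[P m r]]; [exists P|exists P]. Qed.

Lemma inOD {L : fieldExtType rat} (x y : L) : inO x -> inO y -> inO (x + y).
Proof. by move=> /inO_integral hx /inO_integral hy; apply/inO_integral/integral_add. Qed.
Lemma inOM {L : fieldExtType rat} (x y : L) : inO x -> inO y -> inO (x * y).
Proof. by move=> /inO_integral hx /inO_integral hy; apply/inO_integral/integral_mul. Qed.
Lemma inON {L : fieldExtType rat} (x : L) : inO x -> inO (- x).
Proof. by move=> /inO_integral hx; apply/inO_integral/integral_opp. Qed.
Lemma inOB {L : fieldExtType rat} (x y : L) : inO x -> inO y -> inO (x - y).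
Proof. by move=> hx hy; apply: inOD => //; apply: inON. Qed.
Lemma inO_int {L : fieldExtType rat} (z : int) : inO (z%:~R : L).
Proof.
exists ('X - z%:P); split; first exact: monicXsubC.
by rewrite rmorphB /= map_polyX map_polyC /= root_XsubC.
Qed.
Lemma inO0 {L : fieldExtType rat} : inO (0 : L).
Proof. exact: (inO_int 0). Qed.
Lemma inO1 {L : fieldExtType rat} : inO (1 : L).
Proof. exact: (inO_int 1). Qed.
Lemma inOX {L : fieldExtType rat} (x : L) n : inO x -> inO (x ^+ n).
Proof. by move=> hx; elim: n => [|n IH]; [rewrite expr0; apply: inO1| rewrite exprS; apply: inOM]. Qed.
Lemma inO_sum {L : fieldExtType rat} n (F : 'I_n -> L) : (forall i, inO (F i)) -> inO (\sum_(i < n) F i).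
Proof.
move=> h; apply: (big_ind (fun x : L => inO x)) => [|x y|i _]; [exact: inO0|exact: inOD|exact: h].
Qed.

Lemma dvdO_mulr {L : fieldExtType rat} (a c : L) : inO c -> dvdO a (a * c).
Proof. by move=> hc; exists c. Qed.
Lemma dvdO0 {L : fieldExtType rat} (a : L) : dvdO a 0.
Proof. by exists 0; split; [exact: inO0| rewrite mulr0]. Qed.
Lemma dvdO_refl {L : fieldExtType rat} (a : L) : dvdO a a.
Proof. by exists 1; split; [exact: inO1| rewrite mulr1]. Qed.
Lemma dvdOD {L : fieldExtType rat} [a b c : L] : dvdO a b -> dvdO a c -> dvdO a (b + c).
Proof. by move=> [x [hx ->]] [y [hy ->]]; exists (x + y); split; [apply: inOD|rewrite mulrDr]. Qed.
Lemma dvdON {L : fieldExtType rat} [a b : L] : dvdO a b -> dvdO a (- b).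
Proof. by move=> [x [hx ->]]; exists (- x); split; [apply: inON|rewrite mulrN]. Qed.
Lemma dvdOB {L : fieldExtType rat} [a b c : L] : dvdO a b -> dvdO a c -> dvdO a (b - c).
Proof. by move=> hb hc; apply: dvdOD => //; apply: dvdON. Qed.
Lemma dvdO_mull {L : fieldExtType rat} (a b c : L) : inO c -> dvdO a b -> dvdO a (c * b).
Proof. by move=> hc [x [hx ->]]; exists (c * x); split; [apply: inOM|rewrite mulrCA]. Qed.
Lemma dvdO_mulr2 {L : fieldExtType rat} (a b c : L) : inO c -> dvdO a b -> dvdO a (b * c).
Proof. by move=> hc h; rewrite mulrC; apply: dvdO_mull. Qed.
Lemma dvdO_trans {L : fieldExtType rat} [a b c : L] : dvdO a b -> dvdO b c -> dvdO a c.
Proof. by move=> [x [hx ->]] [y [hy ->]]; exists (x * y); split; [apply: inOM|rewrite mulrA]. Qed.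
Lemma dvdO_inO {L : fieldExtType rat} (a b : L) : inO a -> dvdO a b -> inO b.
Proof. by move=> ha [x [hx ->]]; apply: inOM. Qed.

Lemma congO_refl {L : fieldExtType rat} (q a : L) : congO q a a.
Proof. by rewrite /congO subrr; apply: dvdO0. Qed.
Lemma congO_sym {L : fieldExtType rat} [q a b : L] : congO q a b -> congO q b a.
Proof. by rewrite /congO => h; rewrite -opprB; apply: dvdON. Qed.
Lemma congO_trans {L : fieldExtType rat} [q a b c : L] : congO q a b -> congO q b c -> congO q a c.
Proof. by rewrite /congO => h1 h2; have := dvdOD h1 h2; rewrite addrA subrK. Qed.
Lemma congO_mull {L : fieldExtType rat} [q a b c : L] : inO c -> congO q a b -> congO q (c * a) (c * b).
Proof. by rewrite /congO => hc h; rewrite -mulrBr; apply: dvdO_mull. Qed.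
Lemma congO_mulr {L : fieldExtType rat} [q a b c : L] : inO c -> congO q a b -> congO q (a * c) (b * c).
Proof. by move=> hc h; rewrite ![_ * c]mulrC; apply: congO_mull. Qed.
Lemma congOD {L : fieldExtType rat} [q a b c d : L] : congO q a b -> congO q c d -> congO q (a + c) (b + d).
Proof. by rewrite /congO => h1 h2; have := dvdOD h1 h2; congr dvdO; ring. Qed.
Lemma inO_horner {L : fieldExtType rat} (P : {poly int}) (z : L) :
  inO z -> inO ((map_poly (fun c : int => c%:~R) P).[z]).
Proof.
move=> hz; elim/poly_ind: P => [|P c IH].
  by rewrite rmorph0 horner0; exact: inO0.
rewrite rmorphD rmorphM /= map_polyX map_polyC hornerMXaddC /=.
by apply: inOD; [apply: inOM|apply: inO_int].
Qed.

Lemma pr_inO {L : fieldExtType rat} [p : L] : prime_elt p -> inO p.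
Proof. by case. Qed.
Lemma pr_neq0 {L : fieldExtType rat} [p : L] : prime_elt p -> p != 0.
Proof. by case. Qed.
Lemma pr_ndvd1 {L : fieldExtType rat} [p : L] : prime_elt p -> ~ dvdO p 1.
Proof.
case=> hp _ hnu _ [c [hc e]]; apply: hnu; split => //.
by exists c; split.
Qed.
Lemma pr_mul {L : fieldExtType rat} [p a b : L] : prime_elt p -> inO a -> inO b ->
  dvdO p (a * b) -> dvdO p a \/ dvdO p b.
Proof. by case=> _ _ _ h; apply: h. Qed.
Lemma pr_X {L : fieldExtType rat} [p x : L] n : prime_elt p -> inO x ->
  dvdO p (x ^+ n) -> dvdO p x.
Proof.
move=> hp hx; elim: n => [|n IH]; first by rewrite expr0 => /(pr_ndvd1 hp).
rewrite exprS => /(pr_mul hp hx (inOX x n hx)) [] //; exact: IH.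
Qed.
Lemma pr_unit {L : fieldExtType rat} [p u : L] : prime_elt p -> unitO u -> ~ dvdO p u.
Proof.
move=> hp [hu [v [hv e]]] hd; apply: (pr_ndvd1 hp); rewrite -e.
exact: dvdO_mulr2.
Qed.

Lemma pr_int_exists {L : fieldExtType rat} [p : L] : prime_elt p ->
  exists n : nat, (0 < n)%N /\ dvdO p n%:R.
Proof.
move=> hp; have hp0 := pr_neq0 hp; have hpO := pr_inO hp.
have claim : forall P : {poly int}, P != 0 ->
    (map_poly (fun c : int => c%:~R) P).[p] = 0 :> L ->
    exists m : int, m != 0 /\ dvdO p m%:~R.
  elim/poly_ind => [|P c IH]; first by rewrite eqxx.
  rewrite rmorphD rmorphM /= map_polyX map_polyC hornerMXaddC /= => hnz h0.
  have [c0|cn0] := eqVneq c 0.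
    move: hnz h0; rewrite c0 addr0 mulr0z addr0 => hnz /eqP.
    rewrite mulf_eq0 (negbTE hp0) orbF => /eqP h0.
    apply: IH h0; apply: contraNneq hnz => ->; by rewrite mul0r.
  exists c; split => //; exists (- (map_poly (fun c : int => c%:~R) P).[p]).
  split; first by apply: inON; apply: inO_horner.
  by apply/eqP; rewrite mulrN mulrC -addr_eq0 addrC h0.
case: (pr_inO hp) => P [mP rP].
have [m [m0 hm]] := claim P (monic_neq0 mP) (rootP rP).
case: m m0 hm => n.
  by move=> n0 hn; exists n; split => //; rewrite lt0n; apply: contraNneq n0 => ->.
move=> _ hn; exists n.+1; split => //.
by move: hn; rewrite NegzE mulrNz => /dvdON; rewrite opprK.
Qed.
Lemma pr_intunit_nat {L : fieldExtType rat} [p : L] : prime_elt p ->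
  forall c : nat, ~ dvdO p c%:R -> exists c' : int, dvdO p (c%:R * c'%:~R - 1).
Proof.
move=> hp c hc; have [ex [expos exd]] := pr_int_exists hp.
pose Pb n := `[< (0 < n)%N /\ dvdO p (n%:R : L) >].
have exb : exists n, Pb n by exists ex; apply/asboolP; split.
case: (ex_minnP exb) => n0 /asboolP [n0pos hn0] hmin.
have [u [v huv]] := Bezoutz (c%:Z) (n0%:Z).
rewrite /gcdz /= in huv.
set g := gcdn c n0 in huv.
have gpos : (0 < g)%N by rewrite gcdn_gt0 n0pos orbT.
have gn0 : (g %| n0)%N by apply: dvdn_gcdr.
have gc : (g %| c)%N by apply: dvdn_gcdl.
set h := (n0 %/ g)%N.
have n0hg : n0 = (h * g)%N by rewrite divnK.
have inOn : forall k : nat, inO (k%:R : L) by move=> k; exact: (inO_int k).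
have : dvdO p ((h%:R : L) * g%:R) by rewrite -natrM -n0hg.
case/(pr_mul hp (inOn h) (inOn g)) => hd.
  have hp' : (0 < h)%N by move: n0pos; rewrite n0hg muln_gt0 => /andP[].
  have : (n0 <= h)%N by apply: hmin; apply/asboolP.
  have hle : (h <= n0)%N by rewrite n0hg leq_pmulr.
  move=> hge; have hh : h = n0 by apply/eqP; rewrite eqn_leq hle hge.
  have g1 : g = 1%N.
    move: n0hg; rewrite hh => /eqP; rewrite -{1}[n0]muln1 eqn_pmul2l // => /eqP.
    by move=> ->.
  exists u; rewrite -opprB; apply: dvdON.
  have : ((u * c%:Z + v * n0%:Z)%:~R : L) = g%:R by rewrite huv.
  rewrite g1 rmorphD !rmorphM /= => e1.
  have -> : (1 : L) - c%:R * u%:~R = v%:~R * n0%:R.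
    rewrite [X in X - _](_ : _ = u%:~R * (c%:Z)%:~R + v%:~R * (n0%:Z)%:~R); last by rewrite e1.
    rewrite -!pmulrn; ring.
  by apply: dvdO_mull => //; exact: inO_int.
exfalso; apply: hc.
have : (n0 <= g)%N by apply: hmin; apply/asboolP.
have hle : (g <= n0)%N by apply: dvdn_leq.
move=> hge; have hh : g = n0 by apply/eqP; rewrite eqn_leq hle hge.
move: gc; rewrite hh => /dvdnP [k ->].
by rewrite natrM; apply: dvdO_mull.
Qed.

Lemma pr_intunit {L : fieldExtType rat} [p : L] : prime_elt p ->
  forall c : int, ~ dvdO p c%:~R -> exists c' : int, dvdO p (c%:~R * c'%:~R - 1).
Proof.
move=> hp [n|n] hc; first exact: pr_intunit_nat.
have : ~ dvdO p (n.+1%:R : L).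
  by move=> h; apply: hc; rewrite NegzE mulrNz; apply: dvdON.
case/(pr_intunit_nat hp) => c' h; exists (- c').
by rewrite NegzE mulrNz mulrNz mulrNN.
Qed.
Lemma pr_max {L : fieldExtType rat} [p z : L] : prime_elt p -> inO z -> ~ dvdO p z ->
  exists y, inO y /\ dvdO p (z * y - 1).
Proof.
move=> hp hz hnz.
have claim : forall P : {poly int}, (exists i, ~ dvdO p (P`_i)%:~R) ->
    dvdO p ((map_poly (fun c : int => c%:~R) P).[z]) ->
    exists y, inO y /\ dvdO p (z * y - 1).
  elim/poly_ind => [|P c IH].
    by case=> i; rewrite coef0 mulr0z; case; apply: dvdO0.
  rewrite rmorphD rmorphM /= map_polyX map_polyC hornerMXaddC /= => [[i hi]] hd.
  set Pz := (map_poly _ P).[z] in hd.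
  have hPz : inO Pz by apply: inO_horner.
  have [hc|hc] := pselect (dvdO p (c%:~R : L)).
    have : dvdO p (Pz * z) by rewrite -[Pz * z]addr0 -(subrr (c%:~R : L)) addrA; apply: dvdOB.
    case/(pr_mul hp hPz hz) => // hPd.
    apply: IH => //; exists i.-1; move: hi; rewrite coefD coefMX coefC.
    case: i => [|i] /=; last by rewrite ?addr0 ?add0r.
    by rewrite ?addr0 ?add0r => /(_ hc).
  have [c' hc'] := pr_intunit hp _ hc.
  exists (- Pz * c'%:~R); split; first by apply: inOM; [apply: inON|apply: inO_int].
  have -> : z * (- Pz * c'%:~R) - 1 = - ((Pz * z + c%:~R) * c'%:~R) + (c%:~R * c'%:~R - 1).
    by ring.
  by apply: dvdOD => //; apply: dvdON; apply: dvdO_mulr2 => //; apply: inO_int.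
case: hz => P [mP rP]; apply: (claim P).
  exists (size P).-1; move: mP => /monicP; rewrite /lead_coef => ->.
  exact: (pr_ndvd1 hp).
by rewrite (rootP rP); apply: dvdO0.
Qed.

Lemma lift_unit {L : fieldExtType rat} [p eps2 z y : L] (e : nat) :
  unitO eps2 -> inO z -> inO y -> dvdO p (z * y - 1) -> unit_modO (eps2 * p ^+ e) z.
Proof.
move=> [he2 [y2 [hy2 e2]]] hz hy [w [hw hwd]].
set u := 1 - z * y.
exists (y * \sum_(i < e) u ^+ i); split.
  apply: inOM => //; apply: inO_sum => i; apply: inOX; apply: inOB; [exact: inO1|exact: inOM].
rewrite /congO.
have hu : u = p * (- w) by rewrite mulrN -hwd opprB.
have -> : z * (y * \sum_(i < e) u ^+ i) - 1 = - u ^+ e.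
  have h1 : z * (y * \sum_(i < e) u ^+ i) = - ((u - 1) * \sum_(i < e) u ^+ i).
    by rewrite /u; ring.
  by rewrite h1 -subrX1; ring.
rewrite hu exprMn -mulrN.
exists (y2 * - (- w) ^+ e); split; first by apply: inOM => //; apply: inON; apply: inOX; apply: inON.
by rewrite -[LHS]mul1r -e2; ring.
Qed.
Lemma traceD {L : fieldExtType rat} (x y : L) : trace (x + y) = trace x + trace y.
Proof.
rewrite /trace -big_split /=; apply: eq_bigr => i _.
by rewrite mulrDl linearD.
Qed.
Lemma trace0 {L : fieldExtType rat} : trace (0 : L) = 0.
Proof. by rewrite /trace big1 // => i _; rewrite mul0r linear0. Qed.
Lemma traceN {L : fieldExtType rat} (x : L) : trace (- x) = - trace x.
Proof. by apply/eqP; rewrite -subr_eq0 opprK -traceD addNr trace0. Qed.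

Lemma expi2piD (R : realType) (a b : rat) :
  expi2pi R (a + b) = expi2pi R a * expi2pi R b.
Proof.
rewrite /expi2pi rmorphD mulrDr cosD sinD.
by apply/eqP; rewrite eq_complex /= eqxx /= addrC.
Qed.

Lemma cos_sin_int (R : realType) (n : int) :
  cos (2 * pi * n%:~R) = 1 :> R /\ sin (2 * pi * n%:~R) = 0 :> R.
Proof.
have hP : forall m : nat, cos (2 * pi * m%:R) = 1 :> R /\ sin (2 * pi * m%:R) = 0 :> R.
  move=> m; have e : 2 * pi * m%:R = 0 + (pi *+ 2) *+ m :> R.
    by rewrite add0r -mulrnA -[RHS]mulr_natr natrM; ring.
  by rewrite e (periodicn (@cosD2pi R)) (periodicn (@sinD2pi R)) cos0 sin0.
case: n => m; first exact: hP.
rewrite NegzE mulrNz mulrN cosN sinN.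
by have [-> ->] := hP m.+1; rewrite oppr0.
Qed.

Lemma expi2pi_int (R : realType) (n : int) : expi2pi R n%:~R = 1.
Proof.
rewrite /expi2pi rmorph_int; have [-> ->] := cos_sin_int R n; by [].
Qed.

Lemma expi2pi0 (R : realType) : expi2pi R 0 = 1.
Proof. exact: (expi2pi_int R 0). Qed.

Lemma cos_eq1_int (R : realType) (a : rat) :
  cos (2 * pi * ratr a) = 1 :> R -> exists n : int, a = n%:~R.
Proof.
move=> h; exists (Num.floor a).
set n := Num.floor a; set b := a - n%:~R.
have hb : 0 <= b < 1.
  have := floor_itv a; rewrite -/n => /andP[h1 h2].
  by rewrite subr_ge0 h1 /= ltrBlDl; move: h2; rewrite intrD ?mulr1z ?intr1 addrC.
have hab : a = b + n%:~R by rewrite /b subrK.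
have hcb : cos (2 * pi * ratr b) = 1 :> R.
  move: h; rewrite hab rmorphD mulrDr cosD rmorph_int.
  by have [-> ->] := cos_sin_int R n; rewrite mulr1 mulr0 subr0.
suff : ratr b = 0 :> R by move/eqP; rewrite fmorph_eq0 => /eqP hb0; rewrite hab hb0 add0r.
have pi0 := pi_gt0 R.
case/andP: hb => hb0 hb1.
have rb0 : 0 <= ratr b :> R by rewrite ler0q.
have rb1 : ratr b < 1 :> R by move: hb1; rewrite -(ltr_rat R) rmorph1.
case: (lerP (2 * pi * ratr b : R) pi) => [hle|hlt].
  have : 2 * pi * ratr b = 0 :> R.
    apply: cos_inj; rewrite ?in_itv /= ?lexx ?hle ?cos0 ?hcb ?(ltW pi0) //.
    by rewrite andbT; apply: mulr_ge0 => //; apply: mulr_ge0 => //; exact: ltW.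
  move/eqP; rewrite mulf_eq0 => /orP[|/eqP //].
  by rewrite mulf_eq0 (gt_eqF pi0) orbF pnatr_eq0.
exfalso.
have ht2 : 2 * pi * ratr b < 2 * pi :> R.
  by rewrite -[X in _ < X]mulr1 ltr_pM2l // mulr_gt0.
have : pi *+ 2 - 2 * pi * ratr b = 0 :> R.
  apply: cos_inj; rewrite ?in_itv /= ?lexx ?cos0 ?(ltW pi0) //.
  - rewrite mulr2n; apply/andP; split; lra.
  - by rewrite addrC cosD2pi cosN hcb.
move=> h0; rewrite mulr2n in h0; lra.
Qed.
Lemma big_reindex {T : eqType} {C : nmodType} (s : seq T) (rho : T -> T) (F : T -> C) :
  uniq s -> {in s, forall x, rho x \in s} -> {in s &, injective rho} ->
  \sum_(x <- s) F (rho x) = \sum_(x <- s) F x.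
Proof.
move=> us hin hinj.
rewrite -(big_map rho predT F).
apply: perm_big; apply: uniq_perm; first by rewrite map_inj_in_uniq.
  by [].
have [] := uniq_min_size (s1 := map rho s) (s2 := s).
- by rewrite map_inj_in_uniq.
- by move=> y /mapP [x hx ->]; apply: hin.
- by rewrite size_map.
by [].
Qed.

Lemma rrs_eq {L : fieldExtType rat} [q : L] [s : seq L] : reduced_residue_system q s ->
  forall x y, x \in s -> y \in s -> congO q x y -> x = y.
Proof.
case=> _ h2 _ x y hx hy hc.
have [i hi ei] : exists2 i, (i < size s)%N & x = nth 0 s i.
  by exists (index x s); [rewrite index_mem|rewrite nth_index].
have [j hj ej] : exists2 j, (j < size s)%N & y = nth 0 s j.
  by exists (index y s); [rewrite index_mem|rewrite nth_index].
rewrite ei ej in hc *.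
have [->//|ne] := eqVneq i j.
by exfalso; apply: (h2 i j hi hj ne).
Qed.

Lemma rrs_uniq {L : fieldExtType rat} [q : L] [s : seq L] : reduced_residue_system q s -> uniq s.
Proof.
move=> hs; case: hs => _ h2 _; apply/(uniqP 0) => i j hi hj e.
apply/eqP; apply/negP => /negP ne; apply: (h2 i j hi hj ne).
by rewrite e; apply: congO_refl.
Qed.

Definition rep {L : fieldExtType rat} (q : L) (s : seq L) (z : L) : L :=
  nth 0 s (find (fun y => `[< congO q z y >]) s).

Lemma rep_spec {L : fieldExtType rat} (q : L) (s : seq L) (z : L) :
  (exists2 y, y \in s & congO q z y) -> rep q s z \in s /\ congO q z (rep q s z).
Proof.
case=> y hy hc.
have hh : has (fun y => `[< congO q z y >]) s by apply/hasP; exists y => //; apply/asboolP.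
split; first by rewrite /rep mem_nth // -has_find.
by apply/asboolP; apply: (nth_find 0 hh).
Qed.

Lemma diff_int {L : fieldExtType rat} [delta : L] : different_gen delta ->
  forall y, inO y -> exists n : int, trace (y / delta) = n%:~R.
Proof.
case=> _ hd y hy.
have : in_inv_diff (y / delta) by apply/hd; exists y.
by move/(_ 1 inO1); rewrite mulr1.
Qed.

Lemma diff_E1 {L : fieldExtType rat} (R : realType) [delta : L] : different_gen delta ->
  forall y, inO y -> expi2pi R (trace (y / delta)) = 1.
Proof. by move=> hd y hy; have [n ->] := diff_int hd y hy; apply: expi2pi_int. Qed.

Lemma diff_cos {L : fieldExtType rat} (R : realType) [delta : L] : different_gen delta ->
  forall x, (forall y, inO y -> cos (2 * pi * ratr (trace (x * y))) = 1 :> R) ->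
  exists w, inO w /\ x = w / delta.
Proof.
case=> _ hd x h; apply/hd => y hy.
exact: (cos_eq1_int R _ (h y hy)).
Qed.
Lemma mod_cancel {L : fieldExtType rat} [q w w' a b : L] : inO a -> inO b -> inO w' ->
  congO q (w * w') 1 -> congO q (w * a) (w * b) -> congO q a b.
Proof.
move=> ha hb hw' h1 h2; rewrite /congO.
have -> : a - b = - ((w * w' - 1) * (a - b)) + w' * (w * a - w * b) by ring.
apply: dvdOD; first by apply: dvdON; apply: dvdO_mulr2 => //; apply: inOB.
exact: dvdO_mull.
Qed.

Lemma inv_unique {L : fieldExtType rat} [q a y z : L] : inO y -> inO z ->
  congO q (a * y) 1 -> congO q (a * z) 1 -> congO q y z.
Proof.
move=> hy hz h1 h2; rewrite /congO.
have -> : y - z = - ((a * z - 1) * y) + (a * y - 1) * z by ring.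
by apply: dvdOD; [apply: dvdON; apply: dvdO_mulr2|apply: dvdO_mulr2].
Qed.

Lemma unit_mul {L : fieldExtType rat} [q a b : L] : inO b ->
  unit_modO q a -> unit_modO q b -> unit_modO q (a * b).
Proof.
move=> hb [a' [ha' h1]] [b' [hb' h2]]; exists (a' * b'); split; first exact: inOM.
rewrite /congO.
have -> : a * b * (a' * b') - 1 = (a * a' - 1) * (b * b') + (b * b' - 1) by ring.
by apply: dvdOD => //; apply: dvdO_mulr2 => //; apply: inOM.
Qed.

Lemma Re_sum (R : realType) {T : Type} (s : seq T) (F : T -> R[i]) :
  complex.Re (\sum_(x <- s) F x) = \sum_(x <- s) complex.Re (F x).
Proof.
elim: s => [|a s IH]; rewrite ?big_nil ?big_cons //.
by rewrite -IH; case: (F a) => ? ?; case: (\sum_(x <- s) F x).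
Qed.
Theorem lemma4p1 (L : fieldExtType rat) (delta : L)
  (HF : totally_real L) (Hdelta : different_gen delta)
  (p eps1 eps2 : L) (e : nat)
  (Hp : prime_elt p) (He1 : unitO eps1) (He2 : unitO eps2) (He : (1 <= e)%N)
  (r : L) (Hr : inO r) (Hpr : dvdO p r)
  (R : realType) (s : seq L) (inv : L -> L)
  (Hs : reduced_residue_system (eps2 * p ^+ e) s)
  (Hinv : inverse_mod_on (eps2 * p ^+ e) s inv) :
  kloosterman R s inv (eps1 / delta) (r / delta) (eps2 * p ^+ e)
  = (if e == 1%N then -1 else 0).
Proof.
set q := eps2 * p ^+ e in Hs Hinv *.
have hp0 := pr_neq0 Hp; have hpO := pr_inO Hp.
case: (He2) => he2O [y2 [hy2O e2y2]].
have he20 : eps2 != 0 by apply/eqP => h0; move: e2y2; rewrite h0 mul0r => /esym/eqP; rewrite oner_eq0.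
case: (He1) => he1O [y1 [hy1O e1y1]].
have hq0 : q != 0 by rewrite mulf_neq0 // expf_neq0.
have hqO : inO q by apply: inOM => //; apply: inOX.
case: (Hdelta) => hd0 hdiff.
have Hs' := Hs; case: Hs' => Hs1 _ Hs3.
have hpq : dvdO p q.
  exists (eps2 * p ^+ e.-1); split; first by apply: inOM => //; apply: inOX.
  by rewrite /q -(prednK He) exprS; ring.
have ndvd_unit : forall x, unit_modO q x -> ~ dvdO p x.
  move=> x [y [hy hc]] hx; apply: (pr_ndvd1 Hp).
  have h1 : dvdO p (x * y - 1) := dvdO_trans hpq hc.
  have h2 : dvdO p (x * y) := dvdO_mulr2 p x y hy hx.
  by have := dvdOB h2 h1; rewrite opprB addrC subrK.
have unit_ndvd : forall z, inO z -> ~ dvdO p z -> unit_modO q z.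
  move=> z hz hnz; have [y [hy hd]] := pr_max Hp hz hnz.
  exact: (lift_unit e He2 hz hy hd).
have sO : forall x, x \in s -> inO x by move=> x /Hs1 [].
have sU : forall x, x \in s -> unit_modO q x by move=> x /Hs1 [].
have invO : forall x, x \in s -> inO (inv x) by move=> x /Hinv [].
have invC : forall x, x \in s -> congO q (x * inv x) 1 by move=> x /Hinv [].
have repS : forall z, inO z -> unit_modO q z -> rep q s z \in s /\ congO q z (rep q s z).
  by move=> z hz hu; apply: rep_spec; apply: Hs3.
have seq_eq := rrs_eq Hs.
have suniq := rrs_uniq Hs.
pose g (k : L) := k / (delta * q).
pose E (z : L) := expi2pi R (trace z).
have ED : forall a b, E (a + b) = E a * E b by move=> a b; rewrite /E traceD expi2piD.
have Ediff : forall y, inO y -> E (y / delta) = 1 := diff_E1 R Hdelta.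
have Einv : forall k x1 x2, inO k -> congO q x1 x2 -> E (g (k * x1)) = E (g (k * x2)).
  move=> k x1 x2 hk [c [hc ec]].
  have -> : g (k * x1) = g (k * x2) + (k * c) / delta.
    have -> : x1 = x2 + q * c by rewrite -ec addrC subrK.
    by rewrite /g; field; rewrite hd0 hq0.
  by rewrite ED Ediff ?mulr1 //; apply: inOM.
have -> : kloosterman R s inv (eps1 / delta) (r / delta) q =
    \sum_(x <- s) E (g (eps1 * x) + g (r * inv x)).
  rewrite /kloosterman; apply: eq_bigr => x _; rewrite /E /g.
  by congr (expi2pi R (trace _)); field; rewrite hd0 hq0.
have [e1|en1] := eqVneq e 1%N.
  move: (Hpr) => [c [hc er]].
  have hqp : q = eps2 * p by rewrite /q e1 expr1.
  pose psi (x : L) := E (g (eps1 * x)).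
  have -> : \sum_(x <- s) E (g (eps1 * x) + g (r * inv x)) = \sum_(x <- s) psi x.
    apply: eq_big_seq => x hx; rewrite ED.
    have -> : g (r * inv x) = (c * y2 * inv x) / delta.
      have hy2 : y2 = eps2^-1 by rewrite -[y2]mul1r -(mulVf he20) -mulrA e2y2 mulr1.
      rewrite /g hqp er hy2; field; by rewrite hd0 hp0 he20.
    rewrite Ediff; first by rewrite mulr1.
    by apply: inOM; [apply: inOM|apply: invO].
  pose T := 0 :: s.
  have TO : forall x, x \in T -> inO x.
    by move=> x; rewrite inE => /orP [/eqP ->|/sO //]; exact: inO0.
  have n0s : 0 \notin s.
    apply/negP => /sU /ndvd_unit; apply; exact: dvdO0.
  have uT : uniq T by rewrite /= n0s suniq.
  have fullT : forall z, inO z -> exists2 y, y \in T & congO q z y.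
    move=> z hz; have [hpz|hpz] := pselect (dvdO p z).
      exists 0; first by rewrite inE eqxx.
      case: hpz => c' [hc' ->]; rewrite /congO subr0 hqp.
      exists (y2 * c'); split; first exact: inOM.
      by rewrite -[LHS]mul1r -e2y2; ring.
    have [y hy hzy] := Hs3 z hz (unit_ndvd z hz hpz).
    by exists y => //; rewrite inE hy orbT.
  have eqT : forall x y, x \in T -> y \in T -> congO q x y -> x = y.
    have h0 : forall y, y \in s -> ~ congO q 0 y.
      move=> y hy hc0; apply: (ndvd_unit y (sU y hy)).
      by apply: (dvdO_trans hpq); move: hc0; rewrite /congO sub0r => /dvdON; rewrite opprK.
    move=> x y; rewrite !inE => /orP [/eqP ->|hx] /orP [/eqP ->|hy] //.
    - by move=> /(h0 y hy).
    - by move=> /congO_sym /(h0 x hx).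
    - exact: seq_eq.
  have [y0 [hy0 hne]] : exists y0, inO y0 /\ psi y0 != 1.
    case: (pselect (exists y0, inO y0 /\ psi y0 != 1)) => // hn; exfalso.
    have hall : forall y, inO y -> psi y = 1.
      move=> y hy; apply/eqP; case: eqP => // /eqP hne; exfalso; apply: hn; exists y; split => //.
    have [w [hw ew]] : exists w, inO w /\ eps1 / (delta * q) = w / delta.
      apply: (diff_cos R Hdelta) => y hy.
      have := hall y hy; rewrite /psi /E /g /expi2pi => /(congr1 (@complex.Re R)) /=.
      by rewrite [eps1 * y / _]mulrAC.
    apply: (pr_unit Hp He1); apply: (dvdO_trans hpq); exists w; split => //.
    have : eps1 / (delta * q) * (delta * q) = w / delta * (delta * q) by rewrite ew.
    have hdq : delta * q != 0 by rewrite mulf_neq0.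
    rewrite mulfVK // => ->; field; exact: hd0.
  pose rho z := rep q T (z + y0).
  have rhoS : forall x, x \in T -> rho x \in T /\ congO q (x + y0) (rho x).
    move=> x hx; apply: rep_spec; apply: fullT; apply: inOD => //; exact: TO.
  have sumT : \sum_(x <- T) psi (rho x) = \sum_(x <- T) psi x.
    apply: big_reindex => //; first by move=> x /rhoS [].
    move=> a b ha hb hab; apply: eqT => //.
    have h1 := (rhoS a ha).2; have h2 := congO_sym (rhoS b hb).2; rewrite -hab in h2.
    have := congO_trans h1 h2.
    by rewrite /congO opprD addrACA subrr addr0.
  have sumT2 : \sum_(x <- T) psi (rho x) = (\sum_(x <- T) psi x) * psi y0.
    rewrite big_distrl /=; apply: eq_big_seq => x hx.
    rewrite /psi -(Einv eps1 (x + y0)) //; last exact: (rhoS x hx).2.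
    by rewrite -ED /g mulrDr mulrDl.
  have hT0 : \sum_(x <- T) psi x = 0.
    apply/eqP; move: sumT2; rewrite sumT => /eqP.
    rewrite -subr_eq0 -{1}[\sum_(x <- T) psi x]mulr1 -mulrBr mulf_eq0 subr_eq0.
    case/orP => // /eqP h1; move: hne; by rewrite -h1 eqxx.
  move: hT0; rewrite big_cons /psi /g mulr0 mul0r /E trace0 expi2pi0.
  by move=> /eqP; rewrite addrC addr_eq0 => /eqP.
have [m em] : exists m, e = m.+2.
  exists e.-2; move: He en1; clear -e; by case: e => [|[|m]].
move: (Hpr) => [c [hc er]].
pose pi0 := eps2 * p ^+ m.+1.
have hpi0O : inO pi0 by apply: inOM => //; apply: inOX.
have hqpi : q = pi0 * p by rewrite /q /pi0 em exprS; ring.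
have hpi2 : forall t, inO t -> dvdO q (pi0 * t * (pi0 * t)).
  move=> t ht; exists (eps2 * p ^+ m * (t * t)); split.
    by apply: inOM; [apply: inOM => //; apply: inOX|apply: inOM].
  by rewrite /q /pi0 em !exprS; ring.
pose f (x : L) := E (g (eps1 * x) + g (r * inv x)).
pose phi (x t : L) := E (g (eps1 * (x * (pi0 * t)))).
pose phi' (t : L) := E (g (pi0 * t)).
have step1 : forall t, inO t -> \sum_(x <- s) f x = \sum_(x <- s) f x * phi x t.
  move=> t ht.
  pose u := 1 + pi0 * t.
  have huO : inO u by apply: inOD; [exact: inO1|apply: inOM].
  have hu' : inO (1 - pi0 * t) by apply: inOB; [exact: inO1|apply: inOM].
  have huu : congO q (u * (1 - pi0 * t)) 1.
    rewrite /congO (_ : u * (1 - pi0 * t) - 1 = - (pi0 * t * (pi0 * t))); last by rewrite /u; ring.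
    by apply: dvdON; apply: hpi2.
  have uxinv : forall x, x \in s -> congO q (u * x * (inv x * (1 - pi0 * t))) 1.
    move=> x hx.
    rewrite (_ : u * x * (inv x * (1 - pi0 * t)) = (x * inv x) * (u * (1 - pi0 * t))); last by ring.
    rewrite /congO (_ : x * inv x * (u * (1 - pi0 * t)) - 1 =
       (x * inv x - 1) * (u * (1 - pi0 * t)) + (u * (1 - pi0 * t) - 1)); last by ring.
    apply: dvdOD; last exact: huu.
    by apply: dvdO_mulr2; [exact: inOM huO hu'|apply: invC].
  have uxU : forall x, x \in s -> unit_modO q (u * x).
    move=> x hx; exists (inv x * (1 - pi0 * t)); split; last exact: uxinv.
    by apply: inOM => //; apply: invO.
  pose rho x := rep q s (u * x).
  have rhoS : forall x, x \in s -> rho x \in s /\ congO q (u * x) (rho x).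
    by move=> x hx; apply: repS; [apply: inOM => //; apply: sO|apply: uxU].
  have -> : \sum_(x <- s) f x = \sum_(x <- s) f (rho x).
    symmetry; apply: big_reindex => //; first by move=> x /rhoS [].
    move=> a b ha hb hab; apply: seq_eq => //.
    apply: (mod_cancel (sO a ha) (sO b hb) hu' huu).
    have h1 := (rhoS a ha).2; have h2 := congO_sym (rhoS b hb).2; rewrite -hab in h2.
    exact: congO_trans h1 h2.
  apply: eq_big_seq => x hx.
  have [hrs hrc] := rhoS x hx.
  have hinvr : congO q (inv (rho x)) (inv x * (1 - pi0 * t)).
    apply: (inv_unique (a := rho x)); [exact: invO|apply: inOM => //; exact: invO|exact: invC|].
    apply: congO_trans (uxinv x hx).
    by apply: congO_mulr; [apply: inOM => //; apply: invO|apply: congO_sym].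
  rewrite /f ED (Einv eps1 _ (u * x)) //; last exact: congO_sym.
  rewrite (Einv r _ (inv x * (1 - pi0 * t))) //.
  have -> : g (eps1 * (u * x)) = g (eps1 * x) + g (eps1 * (x * (pi0 * t))).
    by rewrite /g /u -mulrDl; congr (_ * _); ring.
  have -> : g (r * (inv x * (1 - pi0 * t))) = g (r * inv x) + (- (c * inv x * t)) / delta.
    rewrite /g hqpi er /pi0; field; by rewrite hd0 hp0 he20 expf_neq0.
  rewrite ED (ED (g (eps1 * x))) (ED (g (r * inv x))) Ediff; last by apply: inON; apply: inOM => //; apply: inOM => //; apply: invO.
  rewrite /phi mulr1 -!mulrA; congr (_ * _); exact: mulrC.
have step2 : forall x, x \in s -> \sum_(t <- s) phi x t = \sum_(t <- s) phi' t.
  move=> x hx.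
  have hxO := sO x hx.
  have hw : congO q (eps1 * x * (y1 * inv x)) 1.
    rewrite (_ : eps1 * x * (y1 * inv x) = (eps1 * y1) * (x * inv x)); last by ring.
    by rewrite e1y1 mul1r; apply: invC.
  have hw'O : inO (y1 * inv x) by apply: inOM => //; apply: invO.
  have exU : unit_modO q (eps1 * x) by exists (y1 * inv x); split.
  pose rho t := rep q s (eps1 * x * t).
  have rhoS : forall t, t \in s -> rho t \in s /\ congO q (eps1 * x * t) (rho t).
    move=> t ht; apply: repS; first by apply: inOM; [apply: inOM|apply: sO].
    by apply: unit_mul; [apply: sO|exact: exU|apply: sU].
  have rin : {in s, forall t, rho t \in s} by move=> t /rhoS [].
  have rinj : {in s &, injective rho}.
    move=> a b ha hb hab; apply: seq_eq => //.
    apply: (mod_cancel (sO a ha) (sO b hb) hw'O hw).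
    have h1 := (rhoS a ha).2; have h2 := congO_sym (rhoS b hb).2; rewrite -hab in h2.
    exact: congO_trans h1 h2.
  rewrite -(big_reindex s rho phi' suniq rin rinj).
  apply: eq_big_seq => t ht.
  rewrite /phi' (Einv pi0 _ (eps1 * x * t)) //; last exact: congO_sym (rhoS t ht).2.
  by rewrite /phi; congr (E (g _)); ring.
pose D := \sum_(t <- s) (1 - phi' t).
have step3 : (\sum_(x <- s) f x) * D = 0.
  rewrite big_distrl /=.
  have -> : \sum_(x <- s) f x * D = \sum_(x <- s) \sum_(t <- s) (f x - f x * phi x t).
    apply: eq_big_seq => x hx; rewrite /D big_distrr /=.
    have -> : \sum_(t <- s) (f x - f x * phi x t) = f x * \sum_(t <- s) (1 - phi x t).
      by rewrite big_distrr; apply: eq_bigr => t _ /=; ring.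
    by rewrite -big_distrr /= !sumrB (step2 x hx).
  rewrite exchange_big /= big1_seq // => t /andP [_ ht].
  by rewrite sumrB -step1 ?subrr //; apply: sO.
have hD : D != 0.
  apply/negP => /eqP hD0.
  have hcos : forall t, t \in s -> cos (2 * pi * ratr (trace (g (pi0 * t)))) = 1 :> R.
    have : complex.Re D = 0 by rewrite hD0.
    rewrite /D Re_sum big_seq => /eqP; rewrite psumr_eq0.
      move=> /allP hall t ht; have := hall t ht; rewrite ht /= => /eqP.
      by rewrite /phi' /E /expi2pi /= => /eqP; rewrite subr_eq0 => /eqP.
    move=> t _; rewrite /phi' /E /expi2pi /= subr_ge0; exact: cos_le1.
  have hint_s : forall t, t \in s -> exists n : int, trace (g (pi0 * t)) = n%:~R.
    by move=> t ht; apply: (cos_eq1_int R); apply: hcos.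
  have hint_u : forall z, inO z -> unit_modO q z -> exists n : int, trace (g (pi0 * z)) = n%:~R.
    move=> z hz hu; have [hrs hrc] := repS z hz hu.
    have [n1 hn1] := hint_s _ hrs.
    case: hrc => c' [hc' ec'].
    move: hn1 ec'; move: (rep q s z) => y hn1 ec'.
    have -> : g (pi0 * z) = g (pi0 * y) + (pi0 * c') / delta.
      have -> : z = y + q * c' by rewrite -ec' addrC subrK.
      rewrite /g; field; by rewrite hd0 hq0.
    have [n2 hn2] := diff_int Hdelta (pi0 * c') (inOM pi0 c' hpi0O hc').
    by exists (n1 + n2); rewrite traceD hn1 hn2 intrD.
  have hint : forall z, inO z -> exists n : int, trace (g (pi0 * z)) = n%:~R.
    move=> z hz; have [hpz|hpz] := pselect (dvdO p z); last first.
      by apply: hint_u => //; apply: unit_ndvd.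
    have hz1 : ~ dvdO p (z + 1).
      move=> h; apply: (pr_ndvd1 Hp); have := dvdOB h hpz; by rewrite addrAC subrr add0r.
    have hz1O : inO (z + 1) by apply: inOD => //; exact: inO1.
    have h1 : ~ dvdO p 1 := pr_ndvd1 Hp.
    have [n1 hn1] := hint_u _ hz1O (unit_ndvd _ hz1O hz1).
    have [n2 hn2] := hint_u _ inO1 (unit_ndvd _ inO1 h1).
    exists (n1 - n2).
    have -> : g (pi0 * z) = g (pi0 * (z + 1)) + - g (pi0 * 1) by rewrite /g; ring.
    by rewrite traceD traceN hn1 hn2 intrB.
  have [w [hw ew]] : exists w, inO w /\ pi0 / (delta * q) = w / delta.
    apply/hdiff => y hy; have [n hn] := hint y hy; exists n.
    by rewrite -hn /g mulrAC.
  apply: (pr_ndvd1 Hp); exists w; split => //.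
  have : pi0 / (delta * q) * (delta * p) = w / delta * (delta * p) by rewrite ew.
  rewrite hqpi.
  have -> : pi0 / (delta * (pi0 * p)) * (delta * p) = 1.
    field; rewrite hd0 hp0 /pi0 mulf_neq0 ?expf_neq0 //.
  move=> ->; field; exact: hd0.
move: step3 => /eqP; rewrite mulf_eq0 (negbTE hD) orbF => /eqP ->.
by rewrite ?(negbTE en1).
Qed.
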